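(* Let $k\ge 2$ and $r\ge 0$ be integers, and let $\vec m=(m_0,\dots,m_r)$ be a vector of nonnegative integers with at least one positive entry. Then \[ V(\vec m)\le k\log_{b(k)} W(\vec m),\qquad\text{where } b(k)=\frac{k^k}{(k-1)^{k-1}},\quad W(\vec m)=\sum_{i=0}^r m_i k^{2i}. \]
   Context: Let $N=\sum_i m_i$, $\mathcal{Y}=\{1,\dots,k\}$, $\mathcal{X}=[k]^N$, and experts $h_j(x)=x_j$, $j=1,\dots,N$, where $m_i$ of the experts are assigned budget $B(h_j)=i$. Let $\mathcal{P}_{\vec m}$ be the set of finite sequences of examples in $\mathcal{X}\times\mathcal{Y}$ for which some $h_j$ errs ($h_j(x)\ne y$) on at most $B(h_j)$ examples. $V(\vec m)=\mathsf{opt}_{\operatorname{bandit}}^{\operatorname{adap}}(\mathcal{P}_{\vec m})$, defined as follows. Bandit feedback game: each round an adaptive adversary chooses $x_t$ from the history; the learner chooses a distribution $\pi^{(t)}$ on $\mathcal{Y}$ (from history and $x_t$); the adversary, seeing $\pi^{(t)}$, chooses a distribution $\tau^{(t)}$; $\hat y_t\sim\pi^{(t)}$, $y_t\sim\tau^{(t)}$; the learner learns only whether $\hat y_t=y_t$. The adversary must ensure that whenever the history is realizable, every $y_t$ in the support of $\tau^{(t)}$ keeps it realizable, where a history of (instance, correct/incorrect, prediction) triples is realizable if some choice of true labels agreeing with the observations gives a sequence in $\mathcal{P}_{\vec m}$. $\mathsf{opt}_{\operatorname{bandit}}^{\operatorname{adap}}=\inf_{\text{learner}}\sup_{\text{adversary}}$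 expected number of mistakes ($\hat y_t\ne y_t$). *)

(* Defs.v *)
From HB Require Import structures.
From mathcomp Require Import all_boot all_order all_algebra.
From mathcomp Require Import all_classical all_reals all_analysis.
Set Implicit Arguments. Unset Strict Implicit. Unset Printing Implicit Defensive.
Import Order.TTheory GRing.Theory Num.Theory.
Local Open Scope ring_scope.
Local Open Scope classical_set_scope.

(* Labels Y = {1,...,k} are represented by 'I_k = {0,...,k-1}.
   The budget vector m = (m_0,...,m_r) is a seq nat of size r+1.
   N = sum_i m_i experts, indexed by 'I_N; the instance space is X = [k]^N,
   represented as {ffun 'I_N -> 'I_k}; expert j is h_j(x) = x j.
   Experts are assigned budgets blockwise: the first m_0 experts have
   budget 0, the next m_1 have budget 1, etc. *)

Fixpoint budget (m : seq nat) (j : nat) : nat :=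
  match m with
  | [::] => 0%N
  | a :: m' => if (j < a)%N then 0%N else (budget m' (j - a)).+1
  end.

Definition nexp (m : seq nat) : nat := sumn m.

Definition inst (k : nat) (m : seq nat) := {ffun 'I_(nexp m) -> 'I_k}.

Definition inP (k : nat) (m : seq nat) (s : seq (inst k m * 'I_k)) : bool :=
  [exists j : 'I_(nexp m),
     (count (fun e : inst k m * 'I_k => e.1 j != e.2) s <= budget m j)%N].

(* bandit histories: (instance, correct?, prediction) triples *)
Definition hist (k : nat) (m : seq nat) := seq (inst k m * bool * 'I_k).

Definition agrees (k : nat) (m : seq nat) (h : hist k m) (ys : seq 'I_k) : bool :=
  (size ys == size h) &&
  all (fun p => let: ((x, b, yh), y) := p in (y == yh) == b) (zip h ys).

Definition realizable (k : nat) (m : seq nat) (h : hist k m) : Prop :=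
  exists ys : seq 'I_k,
    agrees h ys /\ inP (zip [seq e.1.1 | e <- h] ys).

Section Game.
Variable R : realType.
Variables (k : nat) (m : seq nat).

Definition dist := {ffun 'I_k -> R}.

Definition isdist (p : dist) : Prop :=
  (forall y, 0 <= p y) /\ \sum_(y < k) p y = 1.

Definition learner := hist k m -> inst k m -> dist.

Definition valid_learner (L : learner) : Prop :=
  forall h x, isdist (L h x).

Record adversary := Adversary {
  advX : hist k m -> inst k m;
  advY : hist k m -> inst k m -> dist -> dist }.

Definition valid_adversary (A : adversary) : Prop :=
  forall h x p, isdist p ->
    isdist (advY A h x p) /\
    (realizable h ->
      forall yh y : 'I_k, 0 < p yh -> 0 < advY A h x p y ->
        realizable (rcons h (x, yh == y, yh))).

Fixpoint emistakes (L : learner) (A : adversary) (T : nat) (h : hist k m) : R :=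
  match T with
  | 0%N => 0
  | T'.+1 =>
      let x := advX A h in
      let p := L h x in
      let q := advY A h x p in
      \sum_(yh < k) \sum_(y < k)
         p yh * q y * ((yh != y)%:R + emistakes L A T' (rcons h (x, yh == y, yh)))
  end.

(* V(m) = opt_bandit^adap(P_m) = inf_learner sup_adversary E[#mistakes];
   the adversary also chooses the (finite) number of rounds T. *)
Definition Vopt : \bar R :=
  ereal_inf [set v | exists L : learner, valid_learner L /\
     v = ereal_sup [set w | exists (A : adversary) (T : nat),
            valid_adversary A /\ w = (emistakes L A T [::])%:E]].

End Game.

Definition bk (R : realType) (k : nat) : R :=
  (k%:R ^+ k) / ((k.-1)%:R ^+ k.-1).

Definition Wm (R : realType) (k : nat) (m : seq nat) : R :=
  \sum_(i < size m) (nth 0%N m i)%:R * k%:R ^+ (2 * i).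

(* Main.v *)
Require Import Defs.
From HB Require Import structures.
From mathcomp Require Import all_boot all_order all_algebra.
From mathcomp Require Import all_classical all_reals all_analysis.
From mathcomp Require Import ring lra.
Import Order.TTheory GRing.Theory Num.Theory.
Local Open Scope ring_scope.
Set Implicit Arguments. Unset Strict Implicit.
Section A.
Variable R : realType.
Lemma ln_le_sub1 (x : R) : 0 < x -> ln x <= x - 1.
Proof.
move=> x0; have := expR_ge1Dx (ln x); rewrite lnK ?posrE //; lra.
Qed.
Lemma ln_jensen (t x y : R) : 0 < t < 1 -> 0 < x -> 0 < y ->
  (1 - t) * ln x + t * ln y <= ln ((1 - t) * x + t * y).
Proof.
move=> /andP[t0 t1] x0 y0.
set M := (1 - t) * x + t * y.
have M0 : 0 < M by rewrite /M; apply: addr_gt0; apply: mulr_gt0 => //; lra.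
have h1 := ln_le_sub1 (divr_gt0 x0 M0).
have h2 := ln_le_sub1 (divr_gt0 y0 M0).
rewrite !ln_div ?posrE // in h1 h2.
have e : (1 - t) * (x / M - 1) + t * (y / M - 1) = 0.
  rewrite /M; field; apply/lt0r_neq0; exact: M0.
have : (1 - t) * (ln x - ln M) + t * (ln y - ln M) <= 0.
  rewrite -e; apply: lerD; apply: ler_wpM2l => //; lra.
lra.
Qed.
Lemma ln_inv (x : R) : 0 < x -> ln x^-1 = - ln x.
Proof. by move=> x0; rewrite lnV ?posrE. Qed.

Lemma lnb_eq (k : nat) : (1 < k)%N ->
  ln (bk R k) = ln k%:R * k%:R - ln (k.-1)%:R * (k.-1)%:R.
Proof.
move=> k1; have k0 : (0 < k.-1)%N by rewrite -ltnS prednK // ltnW.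
rewrite /bk ln_div ?posrE; last 2 first.
- by apply: exprn_gt0; rewrite ltr0n ltnW.
- by apply: exprn_gt0; rewrite ltr0n.
rewrite !lnXn ?ltr0n //; last exact: ltnW.
by rewrite !mulr_natr.
Qed.

Lemma lnb_ge1 (k : nat) : (1 < k)%N -> 1 <= ln (bk R k).
Proof.
move=> k1; rewrite lnb_eq //.
have k0 : (0 < k.-1)%N by rewrite -ltnS prednK // ltnW.
have ek : k%:R = (k.-1)%:R + 1 :> R by rewrite natr1 prednK //; exact: ltnW.
set N := (k.-1)%:R : R.
have N1 : 1 <= N by rewrite /N ler1n.
rewrite ek.
have NP : 0 < N + 1 by lra.
have N0 : 0 < N by lra.
have NPi : 0 < (N + 1)^-1 by rewrite invr_gt0.
have h1 := ln_le_sub1 NPi.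
have h2 := ln_le_sub1 (divr_gt0 N0 NP).
rewrite ln_inv in h1; last by lra.
rewrite ln_div ?posrE in h2; [|lra|lra].
set u := (N + 1)^-1 in h1.
have eu : N / (N + 1) = 1 - u by rewrite /u; field; lra.
rewrite eu in h2.
have u0 : 0 < u by rewrite /u invr_gt0; lra.
have h3 : N * (ln (N + 1) - ln N) >= N * u.
  apply: ler_wpM2l; lra.
have eNu : N * u = 1 - u by rewrite -eu mulrC /u.
rewrite eNu in h3.
have u1 : u <= N * u by rewrite ler_peMl //; lra.
have : ln (N + 1) * (N + 1) - ln N * N = ln (N+1) + N * (ln (N + 1) - ln N) by ring.
move=> ->; lra.
Qed.
Definition KK (k : nat) : R := k%:R ^+ 2.
Definition CC (k : nat) : R := k%:R / ln (bk R k).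
Lemma key_ineq (k : nat) (a : R) : (1 < k)%N -> 0 <= a <= 1 ->
  (k.-1)%:R * (1 + CC k * ln (1 - a + a / KK k)) + CC k * ln (a + (1 - a) / KK k) <= 0.
Proof.
move=> k1 /andP[a0 a1]; rewrite /CC /KK.
set K := (k%:R ^+ 2 : R). set C := k%:R / ln (bk R k).
have k0 : (0 < k.-1)%N by rewrite -ltnS prednK // ltnW.
have ek : k%:R = (k.-1)%:R + 1 :> R by rewrite natr1 prednK //; exact: ltnW.
have lb1 := lnb_ge1 k1.
have lbe := lnb_eq k1.
set N := (k.-1)%:R : R in ek lbe *.
have N1 : 1 <= N by rewrite /N ler1n.
set L1 := ln k%:R in lbe. set L0 := ln N in lbe.
set lb := ln (bk R k) in C lb1 lbe *.
have kp : 0 < k%:R :> R by lra.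
have KP : 0 < K by rewrite /K exprn_gt0.
have eK : K = k%:R * k%:R by rewrite /K expr2.
set al := 1 - a + a / K. set be := a + (1 - a) / K.
have Ki : 0 < K^-1 by rewrite invr_gt0.
have K1 : K^-1 <= 1.
  rewrite invf_le1 // eK -natrM ler1n muln_gt0 andbb; exact: ltnW.
have h : a * (1 - K^-1) <= 1 - K^-1 by rewrite ler_piMl // subr_ge0.
have h' : 0 <= a * (1 - K^-1) by rewrite mulr_ge0 // subr_ge0.
have ale : al = 1 - a * (1 - K^-1) by rewrite /al; ring.
have bee : be = K^-1 + a * (1 - K^-1) by rewrite /be; ring.
have alp : K^-1 <= al by rewrite ale; lra.
have bep : K^-1 <= be by rewrite bee; lra.
have albe : al + be = 1 + K^-1 by rewrite ale bee; ring.
set t := (k%:R : R)^-1.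
have t0 : 0 < t by rewrite /t invr_gt0.
have t1 : t < 1 by rewrite /t invf_lt1 //; lra.
have e1t : 1 - t = N / k%:R by rewrite /t ek; field; lra.
have t01 : 0 < t < 1 by rewrite t0 t1.
have alp' : 0 < al by lra.
have bep' : 0 < be by lra.
have xp : 0 < al / (1 - t) by rewrite divr_gt0 // subr_gt0.
have yp : 0 < be / t by rewrite divr_gt0.
have J := ln_jensen t01 xp yp.
have es : (1 - t) * (al / (1 - t)) + t * (be / t) = 1 + K^-1.
  rewrite -albe; field; apply/andP; split; apply/lt0r_neq0 => //; lra.
rewrite es in J.
have hl := ln_le_sub1 (_ : 0 < 1 + K^-1).
have J2 : (1 - t) * ln (al / (1 - t)) + t * ln (be / t) <= K^-1.
  apply: (le_trans J); have := hl ltac:(lra); lra.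
have Np : 0 < N by lra.
rewrite !ln_div ?posrE // in J2; [|lra].
rewrite e1t ln_div ?posrE // in J2.
rewrite /t ln_inv // -/L1 -/L0 in J2.
set A := ln al in J2 *. set B := ln be in J2 *.
have J3 := ler_wpM2l (ltW kp) J2.
have e3 : k%:R * (N / k%:R * (A - (L0 - L1)) + k%:R^-1 * (B - - L1)) = N * A + B + lb.
  rewrite lbe ek; field; lra.
have e4 : k%:R * K^-1 = t by rewrite eK /t; field; lra.
rewrite e3 e4 in J3.
have C0 : 0 <= C by rewrite /C divr_ge0 //; lra.
have J4 := ler_wpM2l C0 J3.
have e5 : C * (t - lb) = lb^-1 - k%:R by rewrite /C /t; field; apply/andP; split; apply/lt0r_neq0; lra.
have e6 : N * (1 + C * A) + C * B = N + C * (N * A + B) by ring.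
have lbi : lb^-1 <= 1 by rewrite invf_le1 //; lra.
have J5 : C * (N * A + B) <= C * (t - lb) by apply: ler_wpM2l => //; lra.
rewrite e6; rewrite e5 in J5; lra.
Qed.
End A.

Section B.
Variable R : realType.
Lemma exists_p (k : nat) (U V : 'I_k -> R) : (0 < k)%N ->
  (forall l, U l <= 0) -> (forall l, (k.-1)%:R * V l + U l <= 0) ->
  exists p : dist R k, isdist p /\
    forall y, \sum_(l < k) p l * (if l == y then U l else V l) <= 0.
Proof.
move=> k0 U0 UV.
case: (pselect (exists l, V l <= 0)) => [[l0 Hl0]|nV].
  exists [ffun l => (l == l0)%:R]; split.
    split; first by move=> y; rewrite ffunE ler0n.
    rewrite (bigD1 l0) //= ffunE eqxx big1 ?addr0 // => i /negbTE Hi.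
    by rewrite ffunE Hi.
  move=> y; rewrite (bigD1 l0) //= ffunE eqxx mul1r big1 ?addr0.
    by case: eqP => _; [exact: U0 | exact: Hl0].
  by move=> i /negbTE Hi; rewrite ffunE Hi mul0r.
have Vp : forall l, 0 < V l.
  by move=> l; rewrite ltNge; apply/negP => h; apply: nV; exists l.
have ek : k%:R = (k.-1)%:R + 1 :> R by rewrite natr1 prednK.
set d := fun l => V l - U l.
have dk : forall l, k%:R * V l <= d l.
  move=> l; have := UV l; rewrite /d ek; lra.
have kp : 0 < k%:R :> R by rewrite ltr0n.
have dp : forall l, 0 < d l.
  move=> l; apply: lt_le_trans (dk l); exact: mulr_gt0.
set S := \sum_(l < k) (d l)^-1.
have Sp : 0 < S.
  rewrite /S (bigD1 (Ordinal k0)) //=.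
  have h1 : 0 < (d (Ordinal k0))^-1 by rewrite invr_gt0.
  have h2 : 0 <= \sum_(i < k | i != Ordinal k0) (d i)^-1.
    by apply: sumr_ge0 => i _; rewrite invr_ge0 ltW.
  lra.
exists [ffun l => (d l)^-1 / S]; split.
  split; first by move=> y; rewrite ffunE divr_ge0 // ?invr_ge0 ltW.
  under eq_bigr do rewrite ffunE.
  by rewrite -mulr_suml divff // gt_eqF.
move=> y.
have pw : forall l, [ffun l => (d l)^-1 / S] l * (if l == y then U l else V l)
   = S^-1 * ((d l)^-1 * V l - (l == y)%:R).
  move=> l; rewrite ffunE; case: eqP => _ /=.
    have dl := dp l; rewrite /d in dl *; field.
    by apply/andP; split; apply/lt0r_neq0.
  rewrite /=; ring.
under eq_bigr do rewrite pw.
rewrite -mulr_sumr sumrB.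
have s1 : \sum_(l < k) ((l == y)%:R : R) = 1.
  rewrite (bigD1 y) //= eqxx big1 ?addr0 // => i /negbTE -> //.
rewrite s1; apply: mulr_ge0_le0; first by rewrite invr_ge0 ltW.
rewrite subr_le0.
have : \sum_(l < k) (d l)^-1 * V l <= \sum_(l < k) (k%:R : R)^-1.
  apply: ler_sum => l _.
  rewrite mulrC ler_pdivrMr ?dp //.
  have -> : V l = (k%:R)^-1 * (k%:R * V l) by rewrite mulKf ?gt_eqF.
  by apply: ler_wpM2l; [rewrite invr_ge0 ltW | exact: dk].
move=> h; apply: (le_trans h); rewrite sumr_const card_ord -[_ *+ k]mulr_natl mulfV // gt_eqF //.
Qed.
End B.


Lemma sum_budget (R : realType) (Kx : R) (m : seq nat) :
  \sum_(j < sumn m) Kx ^+ budget m j = \sum_(i < size m) (nth 0%N m i)%:R * Kx ^+ i.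
Proof.
elim: m => [|a m IH]; first by rewrite !big_ord0.
rewrite [sumn _]/= big_split_ord.
rewrite (eq_bigr (fun _ => 1)); last by move=> i _; rewrite /= ltn_ord expr0.
rewrite (eq_bigr (fun i : 'I_(sumn m) => Kx * Kx ^+ budget m i)); last first.
  by move=> i _; rewrite /= ltnNge leq_addr /= addKn exprS.
rewrite /= -mulr_sumr IH sumr_const card_ord big_ord_recl /= expr0 mulr1.
congr (_ + _); rewrite mulr_sumr; apply: eq_bigr => i _.
by rewrite exprS mulrCA.
Qed.

Section G.
Variables (R : realType) (k : nat) (m : seq nat).

Definition wr (j : 'I_(nexp m)) (e : inst k m * bool * 'I_k) : bool :=
  let: (x, b, yh) := e in if b then x j != yh else x j == yh.
Definition cnt j (h : hist k m) := count (wr j) h.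
Definition wgtf j (h : hist k m) : R :=
  if (cnt j h <= budget m j)%N then KK R k ^+ (budget m j - cnt j h) else 0.
Definition Phif (h : hist k m) : R := \sum_(j < nexp m) wgtf j h.
Definition Aw (h : hist k m) (x : inst k m) (l : 'I_k) : R :=
  \sum_(j < nexp m | x j == l) wgtf j h.
Definition aa h x l := Aw h x l / Phif h.
Definition Uf h x l := CC R k * ln (aa h x l + (1 - aa h x l) / KK R k).
Definition Vf h x l := 1 + CC R k * ln (1 - aa h x l + aa h x l / KK R k).
Definition rr h x (yh y : 'I_k) :=
  if yh == y then aa h x yh + (1 - aa h x yh) / KK R k
  else 1 - aa h x yh + aa h x yh / KK R k.
Definition good h x (p : dist R k) := isdist p /\
  forall y, \sum_(l < k) p l * (if l == y then Uf h x l else Vf h x l) <= 0.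
Definition unif : dist R k := [ffun _ => (k%:R)^-1].
Definition Lrn : learner R k m := fun h x =>
  match pselect (exists p, good h x p) with
  | left e => proj1_sig (cid e)
  | right _ => unif end.

Hypothesis k1 : (1 < k)%N.

Lemma KK_gt1 : 1 <= KK R k.
Proof. by rewrite /KK -natrX ler1n expn_gt0 ltnW. Qed.
Lemma KK_gt0 : 0 < KK R k.
Proof. by apply: lt_le_trans KK_gt1. Qed.
Lemma CC_ge0 : 0 <= CC R k.
Proof. by rewrite /CC divr_ge0 // (le_trans ler01 (lnb_ge1 _ k1)). Qed.

Lemma wgt_ge0 j h : 0 <= wgtf j h.
Proof. by rewrite /wgtf; case: ifP => // _; rewrite exprn_ge0 // ltW // KK_gt0. Qed.

Lemma Phi_split h x l : Phif h = Aw h x l + \sum_(j < nexp m | x j != l) wgtf j h.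
Proof. by rewrite /Phif (bigID (fun j => x j == l)). Qed.

Lemma aa_01 h x l : 0 < Phif h -> 0 <= aa h x l <= 1.
Proof.
move=> P0; rewrite /aa; apply/andP; split.
  by apply: divr_ge0; [apply: sumr_ge0 => *; exact: wgt_ge0 | exact: ltW].
rewrite ler_pdivrMr // mul1r (Phi_split h x l) lerDl.
by apply: sumr_ge0 => *; exact: wgt_ge0.
Qed.

Lemma good_ex h x : 0 < Phif h -> exists p, good h x p.
Proof.
move=> P0; have k0 : (0 < k)%N by apply: ltnW.
have := @exists_p R k (Uf h x) (Vf h x) k0.
apply.
  move=> l; rewrite /Uf; apply: mulr_ge0_le0; first exact: CC_ge0.
  apply: ln_le0; have /andP[a0 a1] := aa_01 x l P0.
  have : (1 - aa h x l) / KK R k <= 1 - aa h x l.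
    by rewrite ler_pdivrMr ?KK_gt0 // ler_peMr ?subr_ge0 // KK_gt1.
  lra.
by move=> l; rewrite /Vf /Uf; apply: key_ineq => //; exact: aa_01.
Qed.

Lemma Lrn_good h x : 0 < Phif h -> good h x (Lrn h x).
Proof.
move=> P0; rewrite /Lrn; case: pselect => [e|ne]; first exact: (proj2_sig (cid e)).
by exfalso; apply: ne; exact: good_ex.
Qed.

Lemma Lrn_valid : valid_learner Lrn.
Proof.
move=> h x; rewrite /Lrn; case: pselect => [e|ne]; first exact: (proj2_sig (cid e)).1.
have kp : 0 < k%:R :> R by rewrite ltr0n ltnW.
split; first by move=> y; rewrite ffunE invr_ge0 ltW.
under eq_bigr do rewrite ffunE.
by rewrite sumr_const card_ord -[_ *+ k]mulr_natl mulfV // gt_eqF.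
Qed.

End G.


Section G2.
Variables (R : realType) (k : nat) (m : seq nat).
Hypothesis k1 : (1 < k)%N.
Local Notation K := (KK R k).
Local Notation wgt := (@wgtf R k m).
Local Notation Phi := (@Phif R k m).
Local Notation rr := (@rr R k m).
Local Notation aa := (@aa R k m).
Local Notation Aw := (@Aw R k m).
Local Notation Uf := (@Uf R k m).
Local Notation Vf := (@Vf R k m).
Local Notation Lrn := (@Lrn R k m).

Lemma cnt_rcons j (h : hist k m) e : cnt j (rcons h e) = (cnt j h + wr j e)%N.
Proof. by rewrite /cnt -cats1 count_cat /= addn0. Qed.

Lemma wgt_rcons_le j (h : hist k m) e :
  wgt j (rcons h e) <= if wr j e then wgt j h / K else wgt j h.
Proof.
rewrite /wgtf cnt_rcons; case: (wr j e) => /=; last by rewrite addn0.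
have K0 := KK_gt0 R k1.
rewrite addn1; case: (ltnP (cnt j h) (budget m j)) => H1.
  rewrite (ltnW H1).
  have -> : (budget m j - cnt j h = (budget m j - (cnt j h).+1).+1)%N.
    by rewrite subnS prednK // subn_gt0.
  by rewrite exprS [K * _]mulrC mulfK ?gt_eqF.
case: ifP => _; last by rewrite mul0r.
by rewrite divr_ge0 // exprn_ge0 // ltW.
Qed.

Lemma rr_gt0 (h : hist k m) x yh y : 0 < Phi h -> 0 < rr h x yh y.
Proof.
move=> P0; have /andP[a0 a1] := aa_01 k1 x yh P0.
have K0 := KK_gt0 R k1; have K1 := KK_gt1 R k1.
have Ki : 0 < K^-1 by rewrite invr_gt0.
have Ki1 : K^-1 <= 1 by rewrite invf_le1.
set a := aa h x yh.
have h1 : a * (1 - K^-1) <= 1 - K^-1 by rewrite ler_piMl // subr_ge0.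
have h2 : 0 <= a * (1 - K^-1) by rewrite mulr_ge0 // subr_ge0.
rewrite /rr -/a; case: eqP => _.
  have -> : a + (1 - a) / K = K^-1 + a * (1 - K^-1) by ring.
  lra.
have -> : 1 - a + a / K = 1 - a * (1 - K^-1) by ring.
lra.
Qed.

Lemma cost_eq (h : hist k m) x yh y :
  (yh != y)%:R + CC R k * ln (rr h x yh y) =
  if yh == y then Uf h x yh else Vf h x yh.
Proof. by rewrite /rr /Uf /Vf; case: eqP => _ /=; rewrite ?add0r. Qed.

Lemma Phi_next (h : hist k m) x yh y : 0 < Phi h ->
  Phi (rcons h (x, yh == y, yh)) <= Phi h * rr h x yh y.
Proof.
move=> P0; have K0 := KK_gt0 R k1.
apply: le_trans (ler_sum _ (fun j _ => wgt_rcons_le j h (x, yh == y, yh))) _.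
rewrite (bigID (fun j => x j == yh)) /=.
have ePhi := Phi_split R h x yh.
set A := Aw h x yh in ePhi *.
set B := \sum_(j < nexp m | x j != yh) wgt j h in ePhi.
rewrite /rr /aa -/A ePhi.
have ABn : A + B != 0 by rewrite -ePhi gt_eqF.
case: (eqVneq yh y) => [E|ne].
  under eq_bigr => j Hj do rewrite Hj /=.
  under [X in _ + X <= _]eq_bigr => j Hj do rewrite Hj /=.
  rewrite -mulr_suml -/A -/B.
  have -> : (A + B) * (A / (A + B) + (1 - A / (A + B)) / K) = A + B / K.
    by field; rewrite ABn gt_eqF.
  by [].
under eq_bigr => j Hj do rewrite Hj /=.
under [X in _ + X <= _]eq_bigr => j Hj do rewrite (negbTE Hj) /=.
rewrite -mulr_suml -/A -/B.
have -> : (A + B) * (1 - A / (A + B) + A / (A + B) / K) = A / K + B.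
  by field; rewrite ABn gt_eqF.
by [].
Qed.

End G2.


Section G3.
Variables (R : realType) (k : nat) (m : seq nat).
Hypothesis k1 : (1 < k)%N.
Local Notation K := (KK R k).
Local Notation wgt := (@wgtf R k m).
Local Notation Phi := (@Phif R k m).
Local Notation rr := (@rr R k m).
Local Notation Uf := (@Uf R k m).
Local Notation Vf := (@Vf R k m).
Local Notation Lrn := (@Lrn R k m).

Lemma cnt_le_count j (h : hist k m) ys : agrees h ys ->
  (cnt j h <= count (fun e : inst k m * 'I_k => e.1 j != e.2)
                 (zip [seq e.1.1 | e <- h] ys))%N.
Proof.
elim: h ys => [|[[x b] yh] h IH] [|y ys] //=.
rewrite /agrees /= eqSS => /andP[sz /andP[hb hall]].
have ag : agrees h ys by rewrite /agrees sz hall.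
rewrite /cnt /= -/(cnt j h); apply: leq_add; last exact: IH.
case: b hb => /= hb.
  by move: hb; rewrite eqb_id => /eqP ->.
move: hb; rewrite eqbF_neg => hb.
case: (eqVneq (x j) yh) => [e|_] //=.
by rewrite e eq_sym hb.
Qed.

Lemma real_Phi (h : hist k m) : realizable h -> 1 <= Phi h.
Proof.
move=> [ys [ag /existsP [j Hj]]].
have hc := leq_trans (cnt_le_count j ag) Hj.
have w1 : 1 <= wgt j h.
  by rewrite /wgtf hc exprn_ege1 // KK_gt1.
rewrite /Phif (bigD1 j) //=; apply: le_trans w1 _; rewrite lerDl.
by apply: sumr_ge0 => i _; exact: wgt_ge0.
Qed.

Lemma main_bound (A : adversary R k m) : valid_adversary A ->
  forall T (h : hist k m), realizable h ->
  emistakes Lrn A T h <= CC R k * ln (Phi h).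
Proof.
move=> vA; elim=> [|T IH] h rh /=.
  by apply: mulr_ge0; [exact: CC_ge0 | apply: ln_ge0; exact: real_Phi].
set x := advX A h; set p := Lrn h x; set q := advY A h x p.
have P1 := real_Phi rh.
have P0 : 0 < Phi h by lra.
have [pd pg] : good h x p := Lrn_good k1 x P0.
have [qd qreal] := vA h x p pd.
set G := CC R k * ln (Phi h).
have C0 := CC_ge0 R k1.
have step : forall yh y,
  p yh * q y * ((yh != y)%:R + emistakes Lrn A T (rcons h (x, yh == y, yh))) <=
  p yh * q y * ((if yh == y then Uf h x yh else Vf h x yh) + G).
  move=> yh y.
  have p0 : 0 <= p yh := pd.1 yh.
  have q0 : 0 <= q y := qd.1 y.
  case: (eqVneq (p yh * q y) 0) => [->|nz]; first by rewrite !mul0r.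
  have pp : 0 < p yh.
    rewrite lt_def p0 andbT; apply: contra nz => /eqP ->; by rewrite mul0r.
  have qp : 0 < q y.
    rewrite lt_def q0 andbT; apply: contra nz => /eqP ->; by rewrite mulr0.
  have rn := qreal rh yh y pp qp.
  apply: ler_wpM2l; first exact: mulr_ge0.
  rewrite -cost_eq -addrA lerD2l.
  apply: le_trans (IH _ rn) _.
  have Pn1 := real_Phi rn.
  have rp := rr_gt0 k1 x yh y P0.
  have := Phi_next k1 x yh y P0.
  rewrite -ler_ln ?posrE; [|lra|exact: mulr_gt0].
  rewrite lnM ?posrE // => hl.
  rewrite /G -mulrDr addrC; exact: ler_wpM2l.
apply: le_trans (ler_sum _ (fun yh _ => ler_sum _ (fun y _ => step yh y))) _.
have E : \sum_(yh < k) \sum_(y < k)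
    p yh * q y * ((if yh == y then Uf h x yh else Vf h x yh) + G) =
  \sum_(y < k) (q y * (\sum_(yh < k) p yh * (if yh == y then Uf h x yh else Vf h x yh)) +
  \sum_(yh < k) (p yh * q y * G)).
  rewrite exchange_big /=; apply: eq_bigr => y _.
  rewrite mulr_sumr -big_split /=; apply: eq_bigr => yh _; ring.
rewrite E big_split /=.
have e1 : forall y : 'I_k, \sum_(yh < k) (p yh * q y * G) = q y * G.
  by move=> y; rewrite -!mulr_suml pd.2 mul1r.
have e2 : \sum_(y < k) \sum_(yh < k) (p yh * q y * G) = G.
  under eq_bigr do rewrite e1.
  by rewrite -mulr_suml qd.2 mul1r.
rewrite e2 gerDr; apply: sumr_le0 => y _.
by apply: mulr_ge0_le0; [exact: qd.1 | exact: pg].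
Qed.


End G3.


Unset Implicit Arguments.
Lemma real_nil (k : nat) (m : seq nat) : has (fun a => 0 < a)%N m ->
  realizable (k:=k) (m:=m) [::].
Proof.
move=> hm.
have n0 : (0 < nexp m)%N.
  rewrite /nexp; elim: m hm => [|a m IH] //= /orP [a0|hm].
    exact: leq_trans a0 (leq_addr _ _).
  exact: leq_trans (IH hm) (leq_addl _ _).
exists [::]; split; first by [].
by apply/existsP; exists (Ordinal n0).
Qed.

Lemma Phi_nil (R : realType) (k : nat) (m : seq nat) :
  Phif R (k:=k) (m:=m) [::] = Wm R k m.
Proof.
rewrite /Phif /Wm.
rewrite (eq_bigr (fun j : 'I_(nexp m) => KK R k ^+ budget m j)); last first.
  by move=> j _; rewrite /wgtf /cnt /= subn0.
rewrite /nexp (sum_budget (KK R k) m); apply: eq_bigr => i _.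
by rewrite /KK -exprM.
Qed.

Theorem lemma4p8 (R : realType) (k : nat) (m : seq nat) :
  (2 <= k)%N -> has (fun a => 0 < a)%N m ->
  (Vopt R k m <= (k%:R * (ln (Wm R k m) / ln (bk R k)))%:E)%E.
Proof.
move=> k2 hm.
have k1 : (1 < k)%N := k2.
rewrite /Vopt; apply: ge_ereal_inf.
exists (ereal_sup [set w | exists (A : adversary R k m) (T : nat),
            valid_adversary A /\ w = (emistakes (Lrn R (k:=k) (m:=m)) A T [::])%:E]).
  by exists (Lrn R (k:=k) (m:=m)); split => //; exact: Lrn_valid.
apply: ge_ereal_sup => w [A [T [vA ->]]].
rewrite lee_fin; apply: le_trans (main_bound k1 vA T (real_nil k m hm)) _.
by rewrite Phi_nil /CC mulrAC -mulrA.
Qed.
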